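(* Let $(V_1, V_2)$ be an isometric pair such that $C(V_1, V_2)$ is compact. Then \[ \operatorname{rank} C(V_1, V_2) = 2\, \operatorname{rank} [V_2^*, V_1] + \dim E_1 - \dim E_{-1}. \]
   Context: All Hilbert spaces are complex and separable. An isometric pair is a pair $(V_1,V_2)$ of commuting isometries on $\mathcal{H}$. $[V_2^*,V_1] := V_2^*V_1 - V_1V_2^*$. $C(V_1,V_2) := I - V_1V_1^* - V_2V_2^* + V_1V_2V_1^*V_2^*$ and $E_\mu := \ker(C(V_1,V_2)-\mu I)$. *)

(* Defs.v *)
From HB Require Import structures.
From mathcomp Require Import all_boot all_order all_algebra.
From mathcomp Require Import boolp classical_sets reals constructive_ereal ereal.
From mathcomp.real_closed Require Import complex.
Set Implicit Arguments. Unset Strict Implicit. Unset Printing Implicit Defensive.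
Import Order.TTheory GRing.Theory Num.Theory.
Local Open Scope ring_scope.
Local Open Scope classical_set_scope.

Section Hilbert.
Variable R : realType.
Local Notation C := (R[i]).
Variable H : lmodType C.
Variable ip : H -> H -> C.

Definition hnorm (x : H) : C := sqrtC (ip x x).

Definition hcauchy (u : nat -> H) : Prop :=
  forall e : C, 0 < e -> exists N : nat, forall m n : nat,
    (N <= m)%N -> (N <= n)%N -> hnorm (u m - u n) < e.

Definition hconverges (u : nat -> H) (l : H) : Prop :=
  forall e : C, 0 < e -> exists N : nat, forall n : nat,
    (N <= n)%N -> hnorm (u n - l) < e.

Definition is_separable_hilbert : Prop :=
  [/\ (forall (a : C) (x y z : H), ip (a *: x + y) z = a * ip x z + ip y z),
      (forall x y : H, ip x y = (ip y x)^*),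
      (forall x : H, 0 <= ip x x),
      (forall x : H, ip x x = 0 -> x = 0) /\
      (forall u : nat -> H, hcauchy u -> exists l, hconverges u l)
    & (exists d : nat -> H, forall (x : H) (e : C), 0 < e ->
          exists n, hnorm (x - d n) < e)].

Definition h_isometry (T : H -> H) : Prop := forall x y : H, ip (T x) (T y) = ip x y.

Definition h_adjoint (T Ts : H -> H) : Prop :=
  forall x y : H, ip (T x) y = ip x (Ts y).

Definition h_compact (T : H -> H) : Prop :=
  forall u : nat -> H, (exists M : C, forall n, hnorm (u n) <= M) ->
    exists (phi : nat -> nat) (l : H),
      (forall n, (phi n < phi n.+1)%N) /\ hconverges (fun n => T (u (phi n))) l.

Definition indep_in (S : set H) (n : nat) : Prop :=
  exists v : 'I_n -> H, (forall i, S (v i)) /\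
    (forall c : 'I_n -> C, \sum_(i < n) c i *: v i = 0 -> forall i, c i = 0).

Definition h_dim (S : set H) : \bar R :=
  ereal_sup [set (n%:R)%:E | n in indep_in S].

Definition h_rank (T : H -> H) : \bar R := h_dim (range T).

Definition defect (V1 V2 V1s V2s : H -> H) : H -> H :=
  fun x => x - V1 (V1s x) - V2 (V2s x) + V1 (V2 (V1s (V2s x))).

Definition commut (V1 V2s : H -> H) : H -> H :=
  fun x => V2s (V1 x) - V1 (V2s x).

Definition eigsp (T : H -> H) (mu : C) : set H := [set x | T x = mu *: x].

End Hilbert.

(* Main.v *)
Require Import Defs.
From HB Require Import structures.
From mathcomp Require Import all_boot all_order all_algebra.
From mathcomp Require Import boolp classical_sets reals constructive_ereal ereal.
From mathcomp.real_closed Require Import complex.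
From mathcomp Require Import ring.
Import Order.TTheory GRing.Theory Num.Theory.
Local Open Scope ring_scope.
Set Implicit Arguments. Unset Strict Implicit. Unset Printing Implicit Defensive.

Section Basic.
Variable R : realType.
Local Notation C := (R[i]).
Variable H : lmodType C.
Variable ip : H -> H -> C.
Hypothesis ipDl : forall (a : C) (x y z : H), ip (a *: x + y) z = a * ip x z + ip y z.
Hypothesis ipC : forall x y : H, ip x y = (ip y x)^*.
Hypothesis ip_ge0 : forall x : H, 0 <= ip x x.
Hypothesis ip_eq0 : forall x : H, ip x x = 0 -> x = 0.

Lemma ip0l z : ip 0 z = 0.
Proof.
have := ipDl 1 0 0 z; rewrite scaler0 addr0 mul1r.
by rewrite -{1}[ip 0 z]addr0 => /addrI <-.
Qed.

Lemma ipDl' x y z : ip (x + y) z = ip x z + ip y z.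
Proof. by have := ipDl 1 x y z; rewrite scale1r mul1r. Qed.

Lemma ipZl a x z : ip (a *: x) z = a * ip x z.
Proof. by have := ipDl a x 0 z; rewrite addr0 ip0l addr0. Qed.

Lemma ipNl x z : ip (- x) z = - ip x z.
Proof. by rewrite -scaleN1r ipZl mulN1r. Qed.

Lemma ipBl x y z : ip (x - y) z = ip x z - ip y z.
Proof. by rewrite ipDl' ipNl. Qed.

Lemma ip0r z : ip z 0 = 0.
Proof. by rewrite ipC ip0l conjC0. Qed.

Lemma ipDr x y z : ip z (x + y) = ip z x + ip z y.
Proof. by rewrite [LHS]ipC [ip z x]ipC [ip z y]ipC ipDl' rmorphD. Qed.

Lemma ipZr a x z : ip z (a *: x) = a^* * ip z x.
Proof. by rewrite [LHS]ipC [ip z x]ipC ipZl rmorphM. Qed.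

Lemma ipNr x z : ip z (- x) = - ip z x.
Proof. by rewrite [LHS]ipC [ip z x]ipC ipNl rmorphN. Qed.

Lemma ipBr x y z : ip z (x - y) = ip z x - ip z y.
Proof. by rewrite ipDr ipNr. Qed.

Lemma ip_suml (I : finType) (F : I -> H) z :
  ip (\sum_i F i) z = \sum_i ip (F i) z.
Proof. exact: (big_morph (fun x => ip x z) (fun x y => ipDl' x y z) (ip0l z)). Qed.

Lemma ip_sumr (I : finType) (F : I -> H) z :
  ip z (\sum_i F i) = \sum_i ip z (F i).
Proof. exact: (big_morph (fun x => ip z x) (fun x y => ipDr x y z) (ip0r z)). Qed.

Lemma ip_real x : (ip x x)^* = ip x x.
Proof. exact: geC0_conj. Qed.

Lemma nondeg x : (forall y, ip x y = 0) -> x = 0.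
Proof. by move=> h; apply: ip_eq0; apply: h. Qed.

Lemma nondeg_r x : (forall y, ip y x = 0) -> x = 0.
Proof. by move=> h; apply: ip_eq0; apply: h. Qed.

Lemma ext_r x y : (forall z, ip z x = ip z y) -> x = y.
Proof.
move=> h; apply/eqP; rewrite -subr_eq0; apply/eqP/nondeg_r => z.
by rewrite ipBr h subrr.
Qed.

Definition lc n (c : 'I_n -> C) (v : 'I_n -> H) := \sum_(i < n) c i *: v i.
Definition span n (v : 'I_n -> H) : set H := [set x | exists c, x = lc c v].
Definition indep n (v : 'I_n -> H) :=
  forall c : 'I_n -> C, lc c v = 0 -> forall i, c i = 0.
Definition subsp (S : set H) := S 0 /\ forall a x y, S x -> S y -> S (a *: x + y).

Lemma subspD S x y : subsp S -> S x -> S y -> S (x + y).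
Proof. by case=> _ h Sx Sy; have := h 1 x y Sx Sy; rewrite scale1r. Qed.
Lemma subspZ S a x : subsp S -> S x -> S (a *: x).
Proof. by case=> h0 h Sx; have := h a x 0 Sx h0; rewrite addr0. Qed.
Lemma subspN S x : subsp S -> S x -> S (- x).
Proof. by move=> hS Sx; rewrite -scaleN1r; apply: subspZ. Qed.
Lemma subspB S x y : subsp S -> S x -> S y -> S (x - y).
Proof. by move=> hS Sx Sy; apply: subspD => //; apply: subspN. Qed.

Lemma subsp_sum S (I : finType) (F : I -> H) :
  subsp S -> (forall i, S (F i)) -> S (\sum_i F i).
Proof.
move=> hS hF; apply: (big_ind S) => //; first by case: hS.
by move=> x y; apply: subspD.
Qed.

Lemma subsp_lc S n (c : 'I_n -> C) v : subsp S -> (forall i, S (v i)) -> S (lc c v).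
Proof. by move=> hS hv; apply: subsp_sum => // i; apply: subspZ. Qed.

Lemma subsp_span n (v : 'I_n -> H) : subsp (span v).
Proof.
split; first by exists (fun _ => 0); rewrite /lc big1 // => i _; rewrite scale0r.
move=> a x y [cx ->] [cy ->]; exists (fun i => a * cx i + cy i).
rewrite /lc scaler_sumr -big_split /=; apply: eq_bigr => i _.
by rewrite scalerDl scalerA.
Qed.

Lemma span_in n (v : 'I_n -> H) i : span v (v i).
Proof.
rewrite /span /=; exists (fun j => (j == i)%:R); rewrite /lc (bigD1 i) //= eqxx scale1r big1 ?addr0 //.
by move=> j /negbTE ->; rewrite scale0r.
Qed.

Lemma subsp_range (T : H -> H) :
  (forall a x y, T (a *: x + y) = a *: T x + T y) -> subsp (range T).
Proof.
move=> hT; split; first by exists 0 => //; have := hT (-1) 0 0; rewrite scaler0 addr0 scaleN1r addNr.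
by move=> a _ _ [x _ <-] [y _ <-]; exists (a *: x + y).
Qed.

Lemma steinitz m k (w : 'I_m -> H) (v : 'I_k -> H) :
  (forall i, span v (w i)) -> indep w -> (m <= k)%N.
Proof.
move=> hw hind; have [a ha] := choice hw.
rewrite leqNgt; apply/negP => km.
pose A : 'M[C]_(m, k) := \matrix_(i, j) a i j.
have : kermx A != 0.
  rewrite -mxrank_eq0 mxrank_ker subn_eq0 -ltnNge.
  by apply: leq_ltn_trans (rank_leq_col A) km.
case/matrix0Pn => i0 [j0 nz].
pose c := row i0 (kermx A).
have cA : c *m A = 0 by rewrite -row_mul mulmx_ker row0.
have : lc (fun i => c 0 i) w = 0.
  rewrite /lc (eq_bigr (fun i => \sum_j (c 0 i * a i j) *: v j)); last first.
    by move=> i _; rewrite ha /lc scaler_sumr; apply: eq_bigr => j _; rewrite scalerA.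
  rewrite exchange_big /= big1 // => j _.
  rewrite -scaler_suml.
  have cAj : \sum_i c 0 i * a i j = 0.
    have := congr1 (fun M : 'M_(1,k) => M 0 j) cA; rewrite mxE [RHS]mxE => h.
    by apply: (etrans _ h); apply: eq_bigr => i _; rewrite /A !mxE.
  by rewrite cAj scale0r.
move/hind=> /(_ j0); rewrite /c mxE => h; by rewrite h eqxx in nz.
Qed.

Lemma maxP (P : nat -> Prop) N : P 0 -> (forall k, P k -> (k <= N)%N) ->
  exists k, P k /\ ~ P k.+1.
Proof.
move=> P0 hb; apply: contrapT => hn.
have hk : forall k, P k.
  elim=> // k ih; apply: contrapT => nk; apply: hn; by exists k.
by have := hb N.+1 (hk _); rewrite ltnn.
Qed.

Lemma widen_lift n (i : 'I_n) : widen_ord (leqnSn n) i = lift ord_max i.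
Proof. by apply: val_inj; rewrite /= /bump leqNgt ltn_ord add0n. Qed.

Lemma lc_recr n (c : 'I_n.+1 -> C) v :
  lc c v = lc (fun j => c (lift ord_max j)) (fun j => v (lift ord_max j))
           + c ord_max *: v ord_max.
Proof. by rewrite /lc big_ord_recr /=; congr (_ + _); apply: eq_bigr => i _; rewrite widen_lift. Qed.

Definition ext n (v : 'I_n -> H) (x : H) : 'I_n.+1 -> H :=
  fun i => if unlift ord_max i is Some j then v j else x.

Lemma ext_lift n (v : 'I_n -> H) x j : ext v x (lift ord_max j) = v j.
Proof. by rewrite /ext liftK. Qed.
Lemma ext_max n (v : 'I_n -> H) x : ext v x ord_max = x.
Proof. by rewrite /ext unlift_none. Qed.

Lemma lc_ext n (c : 'I_n.+1 -> C) v x :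
  lc c (ext v x) = lc (fun j => c (lift ord_max j)) v + c ord_max *: x.
Proof.
rewrite lc_recr ext_max; congr (_ + _); apply: eq_bigr => i _.
by rewrite ext_lift.
Qed.

Lemma ext_indep n (v : 'I_n -> H) x : indep v -> ~ span v x -> indep (ext v x).
Proof.
move=> iv nx c; rewrite lc_ext => h.
have cm : c ord_max = 0.
  apply: contrapT => /eqP nz; apply: nx.
  exists (fun j => - (c ord_max)^-1 * c (lift ord_max j)).
  have hx : c ord_max *: x = - lc (fun j => c (lift ord_max j)) v.
    by apply/eqP; rewrite -subr_eq0 opprK addrC h.
  rewrite -[x](scalerK nz) hx scalerN scaler_sumr -sumrN; apply: eq_bigr => i _.
  by rewrite scalerA mulNr scaleNr.
rewrite cm scale0r addr0 in h.
move=> i; case: (unliftP ord_max i) => [j ->|->] //.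
exact: iv h j.
Qed.

Definition ortho n (v : 'I_n -> H) := forall i j, ip (v i) (v j) = (i == j)%:R.

Lemma ip_lcl n (c : 'I_n -> C) v z : ip (lc c v) z = \sum_i c i * ip (v i) z.
Proof. by rewrite /lc ip_suml; apply: eq_bigr => i _; rewrite ipZl. Qed.

Lemma ip_lc_ortho n (c : 'I_n -> C) v j : ortho v -> ip (lc c v) (v j) = c j.
Proof.
move=> ov; rewrite ip_lcl (bigD1 j) //= ov eqxx mulr1 big1 ?addr0 //.
by move=> i /negbTE ij; rewrite ov ij mulr0.
Qed.

Lemma ortho_indep n (v : 'I_n -> H) : ortho v -> indep v.
Proof. by move=> ov c h i; rewrite -(ip_lc_ortho c i ov) h ip0l. Qed.

Lemma ortho_ext n (v : 'I_n -> H) y : ortho v -> ip y y = 1 ->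
  (forall i, ip (v i) y = 0) -> ortho (ext v y).
Proof.
move=> ov yy vy i j.
case: (unliftP ord_max i) => [i' ->|->]; case: (unliftP ord_max j) => [j' ->|->].
- by rewrite !ext_lift ov (inj_eq (@lift_inj _ _)).
- by rewrite ext_lift ext_max vy eq_sym (negbTE (neq_lift _ _)).
- by rewrite ext_lift ext_max ipC vy conjC0 (negbTE (neq_lift _ _)).
- by rewrite ext_max yy eqxx.
Qed.

Lemma gs_step S n (u : 'I_n -> H) x : subsp S -> (forall i, S (u i)) -> ortho u ->
  S x -> ~ span u x ->
  exists y, [/\ S y, ip y y = 1 & forall i, ip (u i) y = 0].
Proof.
move=> hS Su ou Sx nx.
pose w := x - lc (fun j => ip x (u j)) u.
have wu : forall i, ip w (u i) = 0.
  by move=> i; rewrite /w ipBl ip_lc_ortho // subrr.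
have wS : S w by apply: subspB => //; apply: subsp_lc.
have w0 : w != 0.
  apply/eqP => w0; apply: nx; exists (fun j => ip x (u j)).
  by apply/eqP; rewrite -subr_eq0 -/w w0.
pose s := sqrtC (ip w w).
have s0 : 0 < s by rewrite sqrtC_gt0 lt_def ip_ge0 andbT; apply: contra w0 => /eqP/ip_eq0 ->.
exists (s^-1 *: w); split.
- exact: subspZ.
- rewrite ipZl ipZr geC0_conj ?invr_ge0 ?ltW // mulrA -expr2.
  by rewrite -[ip w w](sqrtCK) -/s -exprMn mulVf ?expr1n // gt_eqF.
- by move=> i; rewrite ipZr ipC wu conjC0 mulr0.
Qed.

Lemma indep_inP (S : set H) n :
  indep_in S n <-> exists v : 'I_n -> H, (forall i, S (v i)) /\ indep v.
Proof. by []. Qed.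

Lemma indep_in0 (S : set H) : indep_in S 0.
Proof. by exists (fun _ => 0); split => [[]|c _ []]. Qed.

Lemma indep_in_pred (S : set H) n : indep_in S n.+1 -> indep_in S n.
Proof.
case=> v [Sv iv]; exists (fun j => v (lift ord_max j)); split => // c h j.
pose c' := fun i : 'I_n.+1 => if unlift ord_max i is Some j then c j else 0.
have : lc c' v = 0.
  rewrite lc_recr /c' unlift_none scale0r addr0 -h; apply: eq_bigr => i _.
  by rewrite liftK.
by move/iv => /(_ (lift ord_max j)); rewrite /c' liftK.
Qed.

Lemma indep_in_le (S : set H) m n : (m <= n)%N -> indep_in S n -> indep_in S m.
Proof.
elim: n => [|n ih]; first by rewrite leqn0 => /eqP ->.
rewrite leq_eqVlt => /orP [/eqP -> //|]; rewrite ltnS => mn /indep_in_pred.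
exact: ih.
Qed.

Lemma dim_ge (S : set H) n : indep_in S n -> ((n%:R)%:E <= h_dim S)%E.
Proof. by move=> h; apply: ereal_sup_ubound; exists n. Qed.

Lemma dim_le (S : set H) n : (forall m, indep_in S m -> (m <= n)%N) ->
  (h_dim S <= (n%:R)%:E)%E.
Proof. by move=> h; apply: ge_ereal_sup => _ [m hm <-]; rewrite lee_fin ler_nat h. Qed.

Lemma dim_fin (S : set H) n : indep_in S n -> (forall m, indep_in S m -> (m <= n)%N) ->
  h_dim S = (n%:R)%:E.
Proof. by move=> h1 h2; apply/eqP; rewrite eq_le dim_le // dim_ge. Qed.

Lemma dim_inf (S : set H) : (forall n, indep_in S n) -> h_dim S = +oo%E.
Proof.
move=> h; have : forall n : nat, ((n%:R)%:E <= h_dim S)%E by move=> n; apply: dim_ge.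
case: (h_dim S) => // [r|] hr.
- have := hr (Num.bound `|r|); rewrite lee_fin => hn.
  by have := lt_le_trans (archi_boundP (normr_ge0 r)) hn; rewrite ltNge ler_norm.
- by have := hr 0%N; rewrite leeNy_eq.
Qed.


Lemma fin_or_inf (S : set H) :
  (forall n, indep_in S n) \/ exists N, forall m, indep_in S m -> (m <= N)%N.
Proof.
case: (pselect (forall n, indep_in S n)) => [h|/existsNP [N hN]]; [by left|right].
exists N => m hm; rewrite leqNgt; apply/negP => Nm.
by apply: hN; apply: indep_in_le hm; apply: ltnW.
Qed.

Lemma onb (S : set H) : subsp S -> (exists N, forall m, indep_in S m -> (m <= N)%N) ->
  exists n (v : 'I_n -> H), [/\ (forall i, S (v i)), ortho v,
     (forall x, S x -> span v x) & h_dim S = (n%:R)%:E].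
Proof.
move=> hS [N hN].
pose P k := exists v : 'I_k -> H, (forall i, S (v i)) /\ ortho v.
have P0 : P 0%N by exists (fun _ => 0); split => [[]|[]].
have Pb : forall k, P k -> (k <= N)%N.
  by move=> k [v [Sv ov]]; apply: hN; exists v; split => //; apply: ortho_indep.
have [k [[v [Sv ov]] nP]] := maxP P0 Pb.
have sp : forall x, S x -> span v x.
  move=> x Sx; apply: contrapT => nx.
  have [y [Sy yy vy]] := gs_step hS Sv ov Sx nx.
  apply: nP; exists (ext v y); split; last exact: ortho_ext.
  by move=> i; rewrite /ext; case: (unlift ord_max i).
exists k, v; split => //; apply: dim_fin; first by exists v; split => //; apply: ortho_indep.
by move=> m [w [Sw iw]]; apply: (steinitz (v := v)) iw => i; apply: sp.
Qed.

Lemma inf_step (S : set H) k (u : 'I_k -> H) : subsp S -> (forall n, indep_in S n) ->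
  (forall i, S (u i)) -> ortho u ->
  exists y, [/\ S y, ip y y = 1 & forall i, ip (u i) y = 0].
Proof.
move=> hS hinf Su ou; have [w [Sw iw]] := hinf k.+1.
have [i ni] : exists i, ~ span u (w i).
  apply: contrapT => /forallNP h.
  have := steinitz (fun i => contrapT (h i)) iw; by rewrite ltnn.
exact: gs_step hS Su ou (Sw i) ni.
Qed.

Definition ons (S : set H) (s : seq H) :=
  (forall i, (i < size s)%N -> S (nth 0 s i)) /\
  (forall i j, (i < size s)%N -> (j < size s)%N -> ip (nth 0 s i) (nth 0 s j) = (i == j)%:R).

Lemma inf_seq (S : set H) : subsp S -> (forall n, indep_in S n) ->
  exists e : nat -> H, (forall n, S (e n)) /\ forall i j, ip (e i) (e j) = (i == j)%:R.
Proof.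
move=> hS hinf.
have step : forall s, exists y, ons S s -> ons S (rcons s y).
  move=> s; case: (pselect (ons S s)) => [[h1 h2]|]; last by move=> h; exists 0.
  have [y [Sy yy uy]] := @inf_step S (size s) (fun i => nth 0 s i) hS hinf
     (fun i => h1 _ (ltn_ord i)) (fun i j => h2 _ _ (ltn_ord i) (ltn_ord j)).
  exists y => _; split.
  - move=> i; rewrite size_rcons ltnS leq_eqVlt nth_rcons => /orP [/eqP ->|hi].
      by rewrite ltnn eqxx.
    by rewrite hi; apply: h1.
  - move=> i j; rewrite size_rcons !ltnS !nth_rcons.
    have yy' : forall i, (i < size s)%N -> ip y (nth 0 s i) = 0.
      by move=> i' hi'; rewrite ipC (uy (Ordinal hi')) conjC0.
    rewrite leq_eqVlt => /orP [/eqP ->|hi]; rewrite leq_eqVlt => /orP [/eqP ->|hj].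
    + by rewrite ltnn eqxx yy.
    + by rewrite ltnn eqxx hj yy' // (gtn_eqF hj).
    + by rewrite ltnn eqxx hi (uy (Ordinal hi)) (ltn_eqF hi).
    + by rewrite hi hj h2.
have [f hf] := choice step.
pose sq n := iter n (fun s => rcons s (f s)) [::].
have sqS : forall n, size (sq n) = n by elim=> //= n ih; rewrite size_rcons ih.
have sqo : forall n, ons S (sq n).
  by elim=> [|n ih]; [split => //|apply: hf].
have sqp : forall n m i, (i < n)%N -> (n <= m)%N -> nth 0 (sq m) i = nth 0 (sq n) i.
  move=> n m i hi; elim: m => [|m ih]; first by rewrite leqn0 => /eqP ->.
  rewrite leq_eqVlt => /orP [/eqP -> //|]; rewrite ltnS => nm.
  by rewrite /= nth_rcons sqS (leq_trans hi nm) ih.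
exists (fun n => nth 0 (sq n.+1) n); split.
  by move=> n; apply: (sqo n.+1).1; rewrite sqS.
move=> i j; have hM : forall k, (k <= maxn i j)%N -> nth 0 (sq k.+1) k = nth 0 (sq (maxn i j).+1) k.
  by move=> k hk; rewrite (sqp k.+1).
rewrite (hM i (leq_maxl _ _)) (hM j (leq_maxr _ _)).
by apply: (sqo _).2; rewrite sqS ltnS ?leq_maxl ?leq_maxr.
Qed.

Lemma parallelogram x y :
  ip (x - y) (x - y) + ip (x + y) (x + y) = 2 * ip x x + 2 * ip y y.
Proof. by rewrite !ipBl !ipBr !ipDl' !ipDr; ring. Qed.

Lemma compact_fin (T : H -> H) (S : set H) (mu : C) : h_compact ip T -> subsp S ->
  (mu = 1 \/ mu = -1) -> (forall x, S x -> T x = mu *: x) ->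
  exists N, forall m, indep_in S m -> (m <= N)%N.
Proof.
move=> hT hS hmu hTS; case: (fin_or_inf S) => // hinf.
have [e [Se oe]] := inf_seq hS hinf.
have [phi [l [hphi conv]]] : exists (phi : nat -> nat) (l : H),
   (forall n, (phi n < phi n.+1)%N) /\ hconverges ip (fun n => T (e (phi n))) l.
  apply: hT; exists 1 => n; by rewrite /hnorm oe eqxx sqrtC1.
have h2 : (0 : C) < 1/2 by rewrite divr_gt0 ?ltr01 ?ltr0n.
have [N hN] := conv _ h2.
have small : forall n, (N <= n)%N -> ip (T (e (phi n)) - l) (T (e (phi n)) - l) < (1/2)^+2.
  move=> n /hN; rewrite /hnorm -[X in _ < X -> _](@sqrCK _ (1/2)) ?ltW //.
  by rewrite ltr_sqrtC // ?qualifE /= ?ip_ge0 // exprn_ge0 // ltW.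
set a := T (e (phi N)) - l; set b := T (e (phi N.+1)) - l.
have ha := small N (leqnn _); have hb := small N.+1 (leqnSn _).
have pq : phi N != phi N.+1 by rewrite ltn_eqF.
have hab : ip (a - b) (a - b) = 2.
  have -> : a - b = mu *: (e (phi N) - e (phi N.+1)).
    by rewrite /a /b opprB addrA subrK !hTS // scalerBr.
  rewrite ipZl ipZr !ipBl !ipBr !oe !eqxx (negbTE pq) eq_sym (negbTE pq).
  by case: hmu => ->; rewrite /= ?conjC1 ?rmorphN1 ?conjC1; ring.
have par := parallelogram a b.
have : (2 : C) < 1.
  rewrite -{1}hab; apply: (le_lt_trans (y := 2 * ip a a + 2 * ip b b)).
    by rewrite -par lerDl.
  have e1 : 2 * (1/2)^+2 + 2 * (1/2)^+2 = 1 :> C by field; rewrite ?pnatr_eq0.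
  rewrite -[X in _ < X]e1.
  by apply: ltrD; rewrite ltr_pM2l ?ltr0n.
have h12 : (1:C) < 2 by rewrite ltr1n.
by move=> h; have := lt_trans h12 h; rewrite ltxx.
Qed.


Definition lin (f : H -> H) := forall a x y, f (a *: x + y) = a *: f x + f y.

Lemma lin0 f : lin f -> f 0 = 0.
Proof. by move=> hf; have := hf (-1) 0 0; rewrite scaler0 addr0 scaleN1r addNr. Qed.
Lemma linD f x y : lin f -> f (x + y) = f x + f y.
Proof. by move=> hf; have := hf 1 x y; rewrite !scale1r. Qed.
Lemma linZ f a x : lin f -> f (a *: x) = a *: f x.
Proof. by move=> hf; have := hf a x 0; rewrite !addr0 lin0 // addr0. Qed.
Lemma linN f x : lin f -> f (- x) = - f x.
Proof. by move=> hf; rewrite -scaleN1r linZ // scaleN1r. Qed.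
Lemma linB f x y : lin f -> f (x - y) = f x - f y.
Proof. by move=> hf; rewrite linD // linN. Qed.
Lemma lin_lc f n (c : 'I_n -> C) v : lin f -> f (lc c v) = lc c (fun i => f (v i)).
Proof.
move=> hf; rewrite /lc; elim/big_rec2: _ => [|i y1 y2 _ <-]; first exact: lin0.
by rewrite hf.
Qed.

Lemma subsp_incl (S T : set H) n : (forall x, S x -> T x) -> indep_in S n -> indep_in T n.
Proof. by move=> ST [v [Sv iv]]; exists v; split => // i; apply: ST. Qed.

Lemma span_bound (S : set H) n (v : 'I_n -> H) : (forall x, S x -> span v x) ->
  forall m, indep_in S m -> (m <= n)%N.
Proof. by move=> hS m [w [Sw iw]]; apply: (steinitz (v := v)) iw => i; apply: hS. Qed.

Lemma dim_basis (S : set H) n (v : 'I_n -> H) : (forall i, S (v i)) -> indep v ->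
  (forall x, S x -> span v x) -> h_dim S = (n%:R)%:E.
Proof. by move=> Sv iv hS; apply: dim_fin; [exists v | apply: span_bound hS]. Qed.

Definition cat n1 n2 (v1 : 'I_n1 -> H) (v2 : 'I_n2 -> H) : 'I_(n1 + n2) -> H :=
  fun i => match split i with inl j => v1 j | inr j => v2 j end.

Lemma cat_l n1 n2 (v1 : 'I_n1 -> H) (v2 : 'I_n2 -> H) j : cat v1 v2 (lshift n2 j) = v1 j.
Proof. by rewrite /cat (unsplitK (inl _ j)). Qed.
Lemma cat_r n1 n2 (v1 : 'I_n1 -> H) (v2 : 'I_n2 -> H) j : cat v1 v2 (rshift n1 j) = v2 j.
Proof. by rewrite /cat (unsplitK (inr _ j)). Qed.

Lemma lc_cat n1 n2 (c : 'I_(n1 + n2) -> C) v1 v2 :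
  lc c (cat v1 v2) = lc (fun j => c (lshift n2 j)) v1 + lc (fun j => c (rshift n1 j)) v2.
Proof.
rewrite /lc big_split_ord /=; congr (_ + _); apply: eq_bigr => j _.
  by rewrite cat_l. by rewrite cat_r.
Qed.

Lemma cat_in (S : set H) n1 n2 (v1 : 'I_n1 -> H) (v2 : 'I_n2 -> H) :
  (forall i, S (v1 i)) -> (forall i, S (v2 i)) -> forall i, S (cat v1 v2 i).
Proof. by move=> h1 h2 i; rewrite /cat; case: split. Qed.

Lemma span_cat n1 n2 (v1 : 'I_n1 -> H) (v2 : 'I_n2 -> H) x y :
  span v1 x -> span v2 y -> span (cat v1 v2) (x + y).
Proof.
move=> [c1 ->] [c2 ->]; exists (fun i => match split i with inl j => c1 j | inr j => c2 j end).
rewrite lc_cat; congr (_ + _); apply: eq_bigr => j _.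
  by rewrite (unsplitK (inl _ j)). by rewrite (unsplitK (inr _ j)).
Qed.

Lemma indep_cat n1 n2 (v1 : 'I_n1 -> H) (v2 : 'I_n2 -> H) :
  indep v1 -> indep v2 ->
  (forall c1 c2, lc c1 v1 + lc c2 v2 = 0 -> lc c1 v1 = 0) -> indep (cat v1 v2).
Proof.
move=> i1 i2 h c; rewrite lc_cat => hc.
have h1 := h _ _ hc; rewrite h1 add0r in hc.
move=> i; rewrite -(splitK i); case: (split i) => j /=.
  exact: (i1 _ h1 j). exact: (i2 _ hc j).
Qed.

Lemma ortho_cat n1 n2 (v1 : 'I_n1 -> H) (v2 : 'I_n2 -> H) :
  ortho v1 -> ortho v2 -> (forall i j, ip (v1 i) (v2 j) = 0) -> indep (cat v1 v2).
Proof.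
move=> o1 o2 h; apply: indep_cat; try exact: ortho_indep.
move=> c1 c2 hc; have : ip (lc c1 v1 + lc c2 v2) (lc c1 v1) = 0 by rewrite hc ip0l.
have cross : ip (lc c2 v2) (lc c1 v1) = 0.
  rewrite ip_lcl big1 // => i _; rewrite ipC ip_lcl big1 ?conjC0 ?mulr0 // => j _.
  by rewrite h mulr0.
by rewrite ipDl' cross addr0; apply: ip_eq0.
Qed.

Lemma eq_lc n (v w : 'I_n -> H) : (forall i, v i = w i) -> forall c, lc c v = lc c w.
Proof. by move=> h c; apply: eq_bigr => i _; rewrite h. Qed.

Lemma proj_on n (u : 'I_n -> H) (S : set H) w : ortho u -> (forall x, S x -> span u x) ->
  (forall x, S x -> ip (w - lc (fun j => ip w (u j)) u) x = 0).
Proof.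
move=> ou hS x /hS [c ->]; rewrite ipC /lc ip_suml big1 ?conjC0 // => i _.
by rewrite ipZl ipC ipBl ip_lc_ortho // subrr conjC0 mulr0.
Qed.


Lemma lin_comp f g : lin f -> lin g -> lin (fun x => f (g x)).
Proof. by move=> hf hg a x y; rewrite hg hf. Qed.
Lemma lin_sub f g : lin f -> lin g -> lin (fun x => f x - g x).
Proof.
move=> hf hg a x y; rewrite hf hg scalerBr opprD !addrA; congr (_ - _).
by rewrite -!addrA; congr (_ + _); rewrite addrC.
Qed.
Lemma lin_id : lin id.
Proof. by []. Qed.

Lemma proj_ipP (P : H -> H) x : (forall x, P (P x) = P x) ->
  (forall x y, ip (P x) y = ip x (P y)) -> ip (P x) x = ip (P x) (P x).
Proof. by move=> PP Psa; rewrite -{1}PP Psa. Qed.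

Lemma eig_char (P Q : H -> H) x : lin P -> lin Q ->
  (forall x, P (P x) = P x) -> (forall x, Q (Q x) = Q x) ->
  (forall x y, ip (P x) y = ip x (P y)) -> (forall x y, ip (Q x) y = ip x (Q y)) ->
  P x - Q x = x -> P x = x /\ Q x = 0.
Proof.
move=> PL QL PP QQ Psa Qsa h.
have e1 : ip x x = ip (P x) (P x) - ip (Q x) (Q x).
  by rewrite -{1}h ipBl (proj_ipP (P := P)) // (proj_ipP (P := Q)).
have e2 : ip (x - P x) (x - P x) = ip x x - ip (P x) (P x).
  rewrite !ipBl !ipBr (proj_ipP (P := P)) // [ip x (P x)]ipC (proj_ipP (P := P)) // geC0_conj //.
  by rewrite subrr subr0.
have : ip (x - P x) (x - P x) + ip (Q x) (Q x) == 0.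
  by apply/eqP; rewrite e2 e1; ring.
rewrite paddr_eq0 // => /andP [/eqP/ip_eq0/eqP h1 /eqP/ip_eq0 h2].
by split => //; apply/eqP; rewrite eq_sym -subr_eq0.
Qed.

Definition dif (P Q : H -> H) x := P x - Q x.

Section Proj.
Variables P Q : H -> H.
Hypothesis PL : lin P.
Hypothesis QL : lin Q.
Hypothesis PP : forall x, P (P x) = P x.
Hypothesis QQ : forall x, Q (Q x) = Q x.
Hypothesis Psa : forall x y, ip (P x) y = ip x (P y).
Hypothesis Qsa : forall x y, ip (Q x) y = ip x (Q y).

Lemma P0 : P 0 = 0. Proof. exact: lin0 PL. Qed.
Lemma Q0 : Q 0 = 0. Proof. exact: lin0 QL. Qed.
Lemma PB x y : P (x - y) = P x - P y. Proof. exact: linB PL. Qed.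
Lemma QB x y : Q (x - y) = Q x - Q y. Proof. exact: linB QL. Qed.

Definition M1 := range (fun x => P (x - Q x)).
Definition Phi x := Q x - P (Q x).
Definition M2 := range Phi.
Definition F := range (fun x => Phi (P (x - Q x))).
Definition E1 : set H := fun x => dif P Q x = 1 *: x.
Definition Em : set H := fun x => dif P Q x = -1 *: x.
Definition RA := range (dif P Q).

Lemma linM1 : lin (fun x => P (x - Q x)).
Proof. by apply: lin_comp => //; apply: lin_sub. Qed.
Lemma linPhi : lin Phi.
Proof. by apply: lin_sub => //; apply: lin_comp. Qed.
Lemma linF : lin (fun x => Phi (P (x - Q x))).
Proof. exact: lin_comp linPhi linM1. Qed.
Lemma linA : lin (dif P Q).
Proof. exact: lin_sub. Qed.

Lemma E1P x : E1 x <-> P x = x /\ Q x = 0.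
Proof.
split; first by rewrite /E1 /= /dif scale1r; apply: eig_char.
by case=> h1 h2; rewrite /E1 /= /dif h1 h2 subr0 scale1r.
Qed.

Lemma EmP x : Em x <-> P x = 0 /\ Q x = x.
Proof.
split.
  rewrite /Em /= /dif scaleN1r => h.
  have h' : Q x - P x = x by rewrite -opprB h opprK.
  by have [] := eig_char QL PL QQ PP Qsa Psa h'.
by case=> h1 h2; rewrite /Em /= /dif h1 h2 sub0r scaleN1r.
Qed.

Lemma subspE1 : subsp E1.
Proof.
split; first by apply/E1P; rewrite P0 Q0.
by move=> a x y /E1P [h1 h2] /E1P [h3 h4]; apply/E1P; rewrite PL QL h1 h2 h3 h4 scaler0 add0r.
Qed.
Lemma subspEm : subsp Em.
Proof.
split; first by apply/EmP; rewrite P0 Q0.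
by move=> a x y /EmP [h1 h2] /EmP [h3 h4]; apply/EmP; rewrite PL QL h1 h2 h3 h4 scaler0 add0r.
Qed.
Lemma subspM1 : subsp M1. Proof. exact: subsp_range linM1. Qed.
Lemma subspM2 : subsp M2. Proof. exact: subsp_range linPhi. Qed.
Lemma subspF : subsp F. Proof. exact: subsp_range linF. Qed.
Lemma subspRA : subsp RA. Proof. exact: subsp_range linA. Qed.

Lemma M1P m : M1 m -> P m = m.
Proof. by case=> y _ <-; rewrite PP. Qed.
Lemma M2P w : M2 w -> P w = 0.
Proof. by case=> y _ <-; rewrite /Phi PB PP subrr. Qed.
Lemma E1M1 x : E1 x -> M1 x.
Proof. by move/E1P=> [h1 h2]; exists x => //; rewrite h2 subr0. Qed.
Lemma EmM2 x : Em x -> M2 x.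
Proof. by move/EmP=> [h1 h2]; exists x => //; rewrite /Phi h2 h1 subr0. Qed.
Lemma FM2 x : F x -> M2 x.
Proof. by case=> y _ <-; exists (P (y - Q y)). Qed.
Lemma E1Phi x : E1 x -> Phi x = 0.
Proof. by move/E1P=> [h1 h2]; rewrite /Phi h2 ?P0 ?Q0 subr0. Qed.

Lemma kerPhi m : M1 m -> Phi m = 0 -> E1 m.
Proof.
move=> hm; have Pm := M1P hm; case: hm => y _ hy.
move/eqP; rewrite /Phi subr_eq0 => /eqP Pz.
have : ip m (Q m) = 0.
  by rewrite {1}Pz -{1}hy Psa PP -Pz ipBl Qsa QQ subrr.
rewrite -{1}QQ -Qsa => /ip_eq0 Qm.
by apply/E1P.
Qed.

Lemma F_orth f e : F f -> Em e -> ip f e = 0.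
Proof.
case=> y _ <- /EmP [Pe Qe].
by rewrite /Phi ipBl Qsa Qe !Psa Pe !ip0r subrr.
Qed.

Lemma M2_orth w : M2 w -> (forall f, F f -> ip w f = 0) -> Em w.
Proof.
move=> hw hF; have Pw := M2P hw.
have PQw : P (Q w) = 0.
  have : ip w (Phi (P (w - Q w))) = 0 by apply: hF; exists w.
  rewrite /Phi ipBr -(Qsa w) -(Psa w) Pw ip0l subr0 PB Pw sub0r ipNr.
  rewrite -Psa -{1}PP Psa => /eqP; rewrite oppr_eq0 => /eqP.
  exact: ip_eq0.
have hz : ip w (w - Q w) = 0.
  have [y _ hy] := hw.
  have Qz : Q (w - Q w) = 0 by rewrite QB QQ subrr.
  have Pz : P (w - Q w) = 0 by rewrite PB Pw PQw subrr.
  by rewrite -{1}hy /Phi ipBl (Qsa y) (Psa (Q y)) Pz Qz !ip0r subrr.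
have Qw : Q w = w.
  have : ip (w - Q w) (w - Q w) = 0.
    by rewrite ipBl hz sub0r ipBr proj_ipP // Qsa QQ subrr oppr0.
  by move/ip_eq0/eqP; rewrite subr_eq0 eq_sym => /eqP.
by apply/EmP.
Qed.

Lemma RA_split r : RA r -> M1 (P r) /\ M2 (P r - r).
Proof.
case=> y _ <-; split; first by exists y => //; rewrite /dif !PB PP.
by exists y => //; rewrite /dif /Phi PB PP [in RHS]opprB [in RHS]addrC [in RHS]addrA subrK.
Qed.

Lemma P_comm_A2 y : P (dif P Q (dif P Q y)) = dif P Q (dif P Q (P y)).
Proof.
rewrite /dif !PB !QB !PP !QQ !PB subrr subr0 opprB addrA subrK.
by [].
Qed.

Lemma Asa x y : ip (dif P Q x) y = ip x (dif P Q y).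
Proof. by rewrite /dif ipBl ipBr Psa Qsa. Qed.

Lemma RA_inv : (exists N, forall m, indep_in RA m -> (m <= N)%N) ->
  (forall x, M1 x -> RA x) /\ (forall x, M2 x -> RA x).
Proof.
move=> hfin; have [n [v [Sv ov sp _]]] := onb subspRA hfin.
have iAv : indep (fun i => dif P Q (v i)).
  move=> c; rewrite -(lin_lc _ _ linA) => h.
  have : RA (lc c v) by apply: subsp_lc => //; exact: subspRA.
  case=> y _ hy.
  have : ip (lc c v) (lc c v) = 0 by rewrite -{1}hy Asa h ip0r.
  by move/ip_eq0 => /(ortho_indep ov).
have A2 : forall r, RA r -> exists y, r = dif P Q (dif P Q y).
  move=> r hr.
  have [c hc] : span (fun i => dif P Q (v i)) r.
    apply: contrapT => nr.
    suff : indep_in RA n.+1 by move/(span_bound sp); rewrite ltnn.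
    exists (ext (fun i => dif P Q (v i)) r); split.
      by move=> i; rewrite /ext; case: (unlift ord_max i) => [j|] //; exists (v j).
    exact: ext_indep.
  have : RA (lc c v) by apply: subsp_lc => //; exact: subspRA.
  case=> y _ hy; exists y; by rewrite hy hc (lin_lc _ _ linA).
split.
- move=> x [y _ <-].
  have [y' hy'] := A2 (dif P Q y) (ex_intro2 _ _ y I erefl).
  have -> : P (y - Q y) = P (dif P Q y) by rewrite /dif !PB PP.
  by rewrite hy' P_comm_A2; exists (dif P Q (P y')).
- move=> x [y _ <-].
  have -> : Phi y = P (dif P Q y) - dif P Q y.
    by rewrite /dif /Phi PB PP [in RHS]opprB [in RHS]addrC [in RHS]addrA subrK.
  apply: subspB; first exact: subspRA.
  + have [y' hy'] := A2 (dif P Q y) (ex_intro2 _ _ y I erefl).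
    by rewrite hy' P_comm_A2; exists (dif P Q (P y')).
  + by exists y.
Qed.

Lemma core : h_compact ip (dif P Q) ->
  h_dim RA = (2%:E * h_dim M2 + h_dim E1 - h_dim Em)%E.
Proof.
move=> hA.
have [e1 [g [Sg og spg dg]]] :=
  onb subspE1 (compact_fin hA subspE1 (or_introl erefl) (fun x h => h)).
have [em [k [Sk ok spk dk]]] :=
  onb subspEm (compact_fin hA subspEm (or_intror erefl) (fun x h => h)).
rewrite dg dk.
case: (fin_or_inf M2) => [hinf|hfin].
  rewrite (dim_inf hinf).
  case: (fin_or_inf RA) => [hRA|hRAfin].
    rewrite (dim_inf hRA) gt0_muley ?lte_fin ?ltr0n // addye // addye //.
  exfalso; have [_ M2RA] := RA_inv hRAfin.
  have [N hN] := hRAfin.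
  by have := hN N.+1 (subsp_incl M2RA (hinf N.+1)); rewrite ltnn.
have Ffin : exists N, forall m, indep_in F m -> (m <= N)%N.
  by have [N hN] := hfin; exists N => m /(subsp_incl FM2) /hN.
have [f [h [Sh oh sph dF]]] := onb subspF Ffin.
have hj : forall j, exists y, h j = Phi (P (y - Q y)).
  by move=> j; case: (Sh j) => y _ <-; exists y.
have [ypre hy] := choice hj.
pose m := fun j => P (ypre j - Q (ypre j)).
have Mm : forall j, M1 (m j) by move=> j; exists (ypre j).
have Phim : forall j, Phi (m j) = h j by move=> j; rewrite hy.
have Phig : forall i, Phi (g i) = 0 by move=> i; apply: E1Phi.
have b1in : forall i, M1 (cat g m i) by apply: cat_in => // i; apply: E1M1.
have b1ind : indep (cat g m).
  apply: indep_cat; first exact: ortho_indep.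
    move=> c hc; apply: (ortho_indep oh).
    by rewrite -(eq_lc Phim) -(lin_lc _ _ linPhi) hc /Phi Q0 P0 subr0.
  move=> c1 c2 hc.
  have : Phi (lc c1 g + lc c2 m) = 0 by rewrite hc /Phi Q0 P0 subr0.
  rewrite (linD _ _ linPhi) !(lin_lc _ _ linPhi).
  rewrite (eq_lc Phig) (eq_lc Phim) {1}/lc big1 ?add0r; last by move=> i _; rewrite scaler0.
  move/(ortho_indep oh) => c20.
  by move: hc; rewrite {2}/lc big1 ?addr0 // => i _; rewrite c20 scale0r.
have b1sp : forall x, M1 x -> span (cat g m) x.
  move=> x hx.
  have : F (Phi x) by case: hx => y _ <-; exists y.
  case/sph => d hd.
  have hk : E1 (x - lc d m).
    apply: kerPhi; first by apply: subspB => //; [exact: subspM1 | apply: subsp_lc => //; exact: subspM1].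
    by rewrite (linB _ _ linPhi) (lin_lc _ _ linPhi) (eq_lc Phim) -hd subrr.
  have -> : x = (x - lc d m) + lc d m by rewrite subrK.
  by apply: span_cat; [apply: spg | exists d].
have b2in : forall i, M2 (cat h k i).
  by apply: cat_in => i; [apply: FM2 | apply: EmM2].
have b2ind : indep (cat h k) by apply: ortho_cat => // i j; apply: F_orth.
have b2sp : forall w, M2 w -> span (cat h k) w.
  move=> w hw.
  pose w' := w - lc (fun j => ip w (h j)) h.
  have hw' : Em w'.
    apply: M2_orth; first by apply: subspB => //; [exact: subspM2 | apply: subsp_lc => //; [exact: subspM2 | move=> i; apply: FM2]].
    exact: proj_on.
  have -> : w = lc (fun j => ip w (h j)) h + w' by rewrite addrC subrK.
  by apply: span_cat; [exists (fun j => ip w (h j)) | apply: spk].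
have RAsp : forall r, RA r -> span (cat (cat g m) (cat h k)) r.
  move=> r hr; have [h1 h2] := RA_split hr.
  have -> : r = P r + - (P r - r) by rewrite opprB addrC subrK.
  apply: span_cat; first exact: b1sp.
  by apply: b2sp; apply: subspN => //; exact: subspM2.
have RAfin : exists N, forall m, indep_in RA m -> (m <= N)%N by eexists; apply: span_bound RAsp.
have [M1RA M2RA] := RA_inv RAfin.
have dRA : h_dim RA = (((e1 + f) + (f + em))%:R)%:E.
  apply: dim_basis RAsp.
    by apply: cat_in => i; [apply: M1RA | apply: M2RA].
  apply: indep_cat => // c1 c2 hc.
  have : P (lc c1 (cat g m) + lc c2 (cat h k)) = 0 by rewrite hc P0.
  rewrite (linD _ _ PL) M1P ?M2P ?addr0 //.
    by apply: subsp_lc => //; exact: subspM2.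
  by apply: subsp_lc => //; exact: subspM1.
have dM2 : h_dim M2 = ((f + em)%:R)%:E by apply: dim_basis b2sp.
rewrite dRA dM2 -EFinM -EFinN -!EFinD; congr (_%:E).
by rewrite !natrD; ring.
Qed.

End Proj.

Lemma adj_r (T Ts : H -> H) : (forall x y, ip (T x) y = ip x (Ts y)) ->
  forall x y, ip x (T y) = ip (Ts x) y.
Proof. by move=> h x y; rewrite ipC h -ipC. Qed.

Lemma dim_eq_of (S T : set H) : (forall n, indep_in S n <-> indep_in T n) -> h_dim S = h_dim T.
Proof.
move=> h; rewrite /h_dim.
have -> : indep_in S = indep_in T by apply: funext => n; apply: propext.
by [].
Qed.

Section Main.
Variables V1 V2 V1s V2s : H -> H.
Hypothesis L1 : lin V1.
Hypothesis L2 : lin V2.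
Hypothesis iso1 : forall x y, ip (V1 x) (V1 y) = ip x y.
Hypothesis iso2 : forall x y, ip (V2 x) (V2 y) = ip x y.
Hypothesis comm : forall x, V1 (V2 x) = V2 (V1 x).
Hypothesis adj1 : forall x y, ip (V1 x) y = ip x (V1s y).
Hypothesis adj2 : forall x y, ip (V2 x) y = ip x (V2s y).

Lemma adj_lin (T Ts : H -> H) : lin T -> (forall x y, ip (T x) y = ip x (Ts y)) -> lin Ts.
Proof.
move=> hT h a x y; apply: ext_r => z.
by rewrite -h ipDr ipZr !h ipDr ipZr.
Qed.

Lemma adj_iso (T Ts : H -> H) : (forall x y, ip (T x) (T y) = ip x y) ->
  (forall x y, ip (T x) y = ip x (Ts y)) -> forall x, Ts (T x) = x.
Proof. by move=> hi h x; apply: ext_r => z; rewrite -h hi. Qed.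

Let L1s := adj_lin L1 adj1.
Let L2s := adj_lin L2 adj2.
Let K1 := adj_iso iso1 adj1.
Let K2 := adj_iso iso2 adj2.

Lemma comms x : V1s (V2s x) = V2s (V1s x).
Proof. by apply: ext_r => z; rewrite -adj1 -adj2 -adj2 -adj1 comm. Qed.

Definition Pm x := x - V2 (V2s x).
Definition Qm x := V1 (Pm (V1s x)).

Lemma linPm : lin Pm. Proof. exact: lin_sub lin_id (lin_comp L2 L2s). Qed.
Lemma linQm : lin Qm. Proof. exact: lin_comp L1 (lin_comp linPm L1s). Qed.
Lemma V2sPm x : V2s (Pm x) = 0.
Proof. by rewrite /Pm (linB _ _ L2s) K2 subrr. Qed.
Lemma PPm x : Pm (Pm x) = Pm x.
Proof. by rewrite {1}/Pm V2sPm (lin0 L2) subr0. Qed.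
Lemma QQm x : Qm (Qm x) = Qm x.
Proof. by rewrite /Qm K1 PPm. Qed.
Lemma Psam x y : ip (Pm x) y = ip x (Pm y).
Proof. by rewrite /Pm ipBl ipBr adj2 (adj_r adj2). Qed.
Lemma Qsam x y : ip (Qm x) y = ip x (Qm y).
Proof. by rewrite /Qm adj1 Psam (adj_r adj1). Qed.

Lemma defectE : defect V1 V2 V1s V2s = dif Pm Qm.
Proof.
apply: funext => x; rewrite /defect /dif /Qm /Pm (linB _ _ L1) -comms.
by rewrite [in RHS]opprB [in RHS]addrA (addrAC x) (addrAC (x - _)).
Qed.

Lemma PhiE x : Phi Pm Qm x = V2 (commut V1 V2s (V1s x)).
Proof.
have e : forall y, y - Pm y = V2 (V2s y) by move=> y; rewrite /Pm opprB addrC subrK.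
rewrite /Phi e; congr V2.
by rewrite /Qm /Pm /commut (linB _ _ L1) (linB _ _ L2s) comm K2.
Qed.

Lemma main_sec : h_compact ip (defect V1 V2 V1s V2s) ->
  h_rank (defect V1 V2 V1s V2s) =
    (2%:E * h_rank (commut V1 V2s)
     + h_dim (eigsp (defect V1 V2 V1s V2s) 1%R)
     - h_dim (eigsp (defect V1 V2 V1s V2s) (-1)%R))%E.
Proof.
rewrite defectE => hc.
have := core linPm linQm PPm QQm Psam Qsam hc.
rewrite /RA /h_rank => ->.
have -> : h_dim (M2 Pm Qm) = h_dim (range (commut V1 V2s)).
  apply: dim_eq_of => n; split.
    case=> w [Mw iw].
    have [yy hyy] := choice (fun i => let: ex_intro2 y _ hy := Mw i in ex_intro _ y hy).
    exists (fun i => commut V1 V2s (V1s (yy i))); split; first by move=> i; exists (V1s (yy i)).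
    move=> c h; apply: iw; change (lc c w = 0); move: h; change (lc c (fun i => commut V1 V2s (V1s (yy i))) = 0 -> lc c w = 0) => h.
    by rewrite -(eq_lc hyy) (eq_lc (fun i => PhiE (yy i))) -(lin_lc _ _ L2) h (lin0 L2).
  case=> z [Dz iz].
  have [u hu] := choice (fun i => let: ex_intro2 y _ hy := Dz i in ex_intro _ y hy).
  exists (fun i => V2 (z i)); split.
    by move=> i; exists (V1 (u i)) => //; rewrite PhiE K1 hu.
  move=> c h; apply: iz; change (lc c z = 0); move: h; change (lc c (fun i => V2 (z i)) = 0 -> lc c z = 0) => h.
  by rewrite -[lc c z]K2 (lin_lc _ _ L2) h (lin0 L2s).
by [].
Qed.

End Main.
End Basic.

Theorem corollary3p6 (R : realType) (H : lmodType R[i]) (ip : H -> H -> R[i])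
  (V1 V2 : {linear H -> H}) (V1s V2s : H -> H) :
  is_separable_hilbert ip ->
  h_isometry ip V1 -> h_isometry ip V2 ->
  (forall x, V1 (V2 x) = V2 (V1 x)) ->
  h_adjoint ip V1 V1s -> h_adjoint ip V2 V2s ->
  h_compact ip (defect V1 V2 V1s V2s) ->
  h_rank (defect V1 V2 V1s V2s) =
    (2%:E * h_rank (commut V1 V2s)
     + h_dim (eigsp (defect V1 V2 V1s V2s) 1%R)
     - h_dim (eigsp (defect V1 V2 V1s V2s) (-1)%R))%E.
Proof.
move=> [ipDl ipC ip_ge0 [ip_eq0 _] _] iso1 iso2 comm adj1 adj2 hc.
have L1 : lin V1 by move=> a x y; rewrite linearP.
have L2 : lin V2 by move=> a x y; rewrite linearP.
exact: (main_sec ipDl ipC ip_ge0 ip_eq0 L1 L2 iso1 iso2 comm adj1 adj2 hc).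
Qed.
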